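(* Let $Q=(-\frac12,\frac12)^N$ and let $f:\mathbb{R}^N\times\mathbb{R}^d\to[0,+\infty)$ be measurable and $Q$-periodic in the first variable, satisfying $C_1|\zeta|\le f(x,\zeta)\le C_2(1+|\zeta|)$, and Lipschitz continuous in the second variable with Lipschitz constant $L>0$, i.e. $|f(x,\zeta_1)-f(x,\zeta_2)|\le L|\zeta_1-\zeta_2|$ for all $x,\zeta_1,\zeta_2$. Let $\mathcal{A}=\sum_{i=1}^NA^{(i)}\partial_{x_i}$ with $A^{(i)}\in\mathbb{R}^{M\times d}$. Define, for $b\in\mathbb{R}^d$, $$f_{\mathcal{A}\text{-hom}}(b):=\inf_{R\in\mathbb{N}}\inf\Big\{\frac{1}{|RQ|}\int_{RQ}f(x,b+w(x))\,dx:\ w\in L^1_{RQ\text{-per}}(\mathbb{R}^N;\mathbb{R}^d),\ \mathcal{A}w=0,\ \frac{1}{|RQ|}\int_{RQ}w=0\Big\}.$$ Then $f_{\mathcal{A}\text{-hom}}:\mathbb{R}^d\to\mathbb{R}$ is Lipschitz continuous with Lipschitz constant $L$.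
   Context: $L^1_{RQ\text{-per}}(\mathbb{R}^N;\mathbb{R}^d)$ denotes functions integrable on $RQ$ extended $RQ$-periodically to $\mathbb{R}^N$; $\mathcal{A}w=0$ is meant in the sense of distributions on $\mathbb{R}^N$. *)

(* Defs.v *)
From HB Require Import structures.
From mathcomp Require Import all_boot all_order all_algebra.
From mathcomp Require Import all_classical all_reals all_analysis.
Set Implicit Arguments.
Unset Strict Implicit.
Unset Printing Implicit Defensive.
Import Order.TTheory GRing.Theory Num.Theory.
Import numFieldNormedType.Exports.
Local Open Scope classical_set_scope.
Local Open Scope ring_scope.

(* Points of R^n are represented by n.-tuple R, which MathComp-Analysis
   equips with the product (= Borel) sigma-algebra generated by the
   coordinate projections. *)

Section Defs.
Variable R : realType.

Definition tadd n (x y : n.-tuple R) : n.-tuple R :=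
  [tuple tnth x j + tnth y j | j < n].
Definition tsub n (x y : n.-tuple R) : n.-tuple R :=
  [tuple tnth x j - tnth y j | j < n].
Definition enorm n (z : n.-tuple R) : R :=
  Num.sqrt (\sum_(j < n) tnth z j ^+ 2).
Definition tshift n (x : n.-tuple R) (i : 'I_n) (c : R) : n.-tuple R :=
  [tuple tnth x j + (if j == i then c else 0) | j < n].
Definition tupd n (x : n.-tuple R) (i : 'I_n) (t : R) : n.-tuple R :=
  [tuple if j == i then t else tnth x j | j < n].

(* Iterated product of the one-dimensional Lebesgue measure:
   lebN 0 is the Dirac mass at the empty tuple, and
   lebN (n+1) A = \int_R lebN n {t | x :: t \in A} dx
   (the product measure lebesgue \x lebN n, transported along cons). *)
Fixpoint lebN (n : nat) : set (n.-tuple R) -> \bar R :=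
  match n return set (n.-tuple R) -> \bar R with
  | 0 => fun A => (\1_A [tuple] : R)%:E
  | n'.+1 => fun A =>
      (\int[@lebesgue_measure R]_x @lebN n' [set t | A (cons_tuple (x : R) t)])%E
  end.
Arguments lebN n _ : clear implicits.

Definition cube n (r : R) : set (n.-tuple R) :=
  [set x | forall i : 'I_n, - (r / 2) < tnth x i < r / 2].
Arguments cube n r : clear implicits.

Definition partial n (i : 'I_n) (phi : n.-tuple R -> R) : n.-tuple R -> R :=
  fun x => derive1 (fun t => phi (tupd x i t)) (tnth x i).
Fixpoint iter_partial n (s : seq 'I_n) (phi : n.-tuple R -> R) :=
  match s with
  | [::] => phi
  | i :: s' => partial i (iter_partial s' phi)
  end.
Definition tcontinuous n (g : n.-tuple R -> R) : Prop :=
  forall x (e : R), 0 < e -> exists2 del : R, 0 < del &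
    forall y, (forall i, `|tnth y i - tnth x i| < del) -> `|g y - g x| < e.
Definition smooth n (phi : n.-tuple R -> R) : Prop :=
  forall s : seq 'I_n, tcontinuous (iter_partial s phi) /\
    forall (i : 'I_n) x,
      derivable (fun t => iter_partial s phi (tupd x i t)) (tnth x i) 1.
Definition compact_support n (phi : n.-tuple R -> R) : Prop :=
  exists r : R, forall x, (exists i, r < `|tnth x i|) -> phi x = 0.
Definition test_fun n (phi : n.-tuple R -> R) : Prop :=
  smooth phi /\ compact_support phi.

(* A w = 0 in the sense of distributions on R^N: for every test function
   phi in C_c^oo(R^N; R^M),
   <A w, phi> = - \int sum_(k,i,j) A^(i)_(k j) w_j d_i phi_k = 0. *)
Definition A_free N d M (A : 'I_N -> 'M[R]_(M, d))
    (w : N.-tuple R -> d.-tuple R) : Prop :=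
  forall phi : 'I_M -> N.-tuple R -> R, (forall k, test_fun (phi k)) ->
    (\int[lebN N]_x
       (\sum_(k < M) \sum_(i < N) \sum_(j < d)
          A i k j * tnth (w x) j * partial i (phi k) x)%:E = 0)%E.

Definition admissible N d M (A : 'I_N -> 'M[R]_(M, d)) (r : nat)
    (w : N.-tuple R -> d.-tuple R) : Prop :=
  [/\ forall j : 'I_d, measurable_fun setT (fun x => tnth (w x) j),
      forall j : 'I_d,
        (\int[lebN N]_(x in cube N r%:R) (`|tnth (w x) j|)%:E < +oo)%E,
      forall x (i : 'I_N), w (tshift x i r%:R) = w x,
      A_free A w &
      forall j : 'I_d, (\int[lebN N]_(x in cube N r%:R) (tnth (w x) j)%:E = 0)%E].

Definition f_A_hom N d M (A : 'I_N -> 'M[R]_(M, d))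
    (f : N.-tuple R -> d.-tuple R -> R) (b : d.-tuple R) : \bar R :=
  ereal_inf [set v | exists (r : nat) (w : N.-tuple R -> d.-tuple R),
    [/\ (0 < r)%N, admissible A r w &
        v = (((r%:R ^+ N)^-1)%:E *
             \int[lebN N]_(x in cube N r%:R) (f x (tadd b (w x)))%:E)%E]].

End Defs.

(* Main.v *)
Require Import Defs.
From HB Require Import structures.
From mathcomp Require Import all_boot all_order all_algebra.
From mathcomp Require Import all_classical all_reals all_analysis.
From mathcomp Require Import measurable_realfun.
From mathcomp Require Import lra.
Import Order.TTheory GRing.Theory Num.Theory.
Import numFieldNormedType.Exports.
Local Open Scope classical_set_scope.
Local Open Scope ring_scope.

Section lebS.
Context (R : realType) (n : nat)
  (mu : {sigma_finite_measure set (n.-tuple R) -> \bar R}).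

Definition consf (p : R * n.-tuple R) : n.+1.-tuple R := cons_tuple p.1 p.2.
Definition unconsf (t : n.+1.-tuple R) : R * n.-tuple R :=
  (thead t, [tuple of behead t]).

Lemma measurable_consf : measurable_fun setT consf.
Proof. exact: (measurable_cons measurable_fst measurable_snd). Qed.

Lemma measurable_unconsf : measurable_fun setT unconsf.
Proof.
apply: measurable_fun_pair; last exact: measurable_behead.
exact: measurable_tnth.
Qed.

Lemma consfK : cancel unconsf consf.
Proof. by move=> [[|x s] Hs] //; apply: val_inj. Qed.

Lemma unconsfK : cancel consf unconsf.
Proof. by case=> x t; rewrite /consf /unconsf /=; congr pair; apply: val_inj. Qed.

Definition lebS (A : set (n.+1.-tuple R)) : \bar R :=
  ((@lebesgue_measure R) \x mu)%E (consf @^-1` A).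

Let lebS0 : lebS set0 = 0%E.
Proof. by rewrite /lebS preimage_set0 measure0. Qed.

Let lebS_ge0 A : (0 <= lebS A)%E.
Proof. by apply: measure_ge0. Qed.

Let lebS_sigma_additive : semi_sigma_additive lebS.
Proof.
move=> F mF tF mUF; rewrite /lebS preimage_bigcup.
apply: measure_semi_sigma_additive.
- by move=> k; rewrite -[X in measurable X]setTI; exact: measurable_consf.
- apply/trivIsetP => /= i j _ _ ij; rewrite -preimage_setI.
  by move/trivIsetP : tF => /(_ _ _ _ _ ij) ->//; rewrite preimage_set0.
- by rewrite -preimage_bigcup -[X in measurable X]setTI; exact: measurable_consf.
Qed.

HB.instance Definition _ := isMeasure.Build _ _ _
  lebS lebS0 lebS_ge0 lebS_sigma_additive.

Let lebS_sigma_finite : sigma_finite setT lebS.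
Proof.
have /sigma_finiteP[F [TF ndF Foo]] := sigma_finiteT (@lebesgue_measure R).
have /sigma_finiteP[G [TG ndG Goo]] := sigma_finiteT mu.
exists (fun k => unconsf @^-1` (F k `*` G k)).
  rewrite -preimage_bigcup.
  apply/seteqP; split => // t _ /=.
  have : (setT : set R) (unconsf t).1 by [].
  rewrite TF => -[i _ Fi].
  have : (setT : set (n.-tuple R)) (unconsf t).2 by [].
  rewrite TG => -[j _ Gj].
  exists (maxn i j) => //; split.
  - by move: Fi; exact/subsetPset/ndF/leq_maxl.
  - by move: Gj; exact/subsetPset/ndG/leq_maxr.
move=> k; have [? ?] := Foo k; have [? ?] := Goo k.
split.
  by rewrite -[X in measurable X]setTI; apply: (measurable_unconsf measurableT); exact: measurableX.
rewrite /lebS (_ : consf @^-1` (unconsf @^-1` (F k `*` G k)) = F k `*` G k).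
  by rewrite product_measure1E// lte_mul_pinfty// ge0_fin_numE.
have -> : consf @^-1` (unconsf @^-1` (F k `*` G k)) =
   (unconsf \o consf) @^-1` (F k `*` G k) by [].
have -> : unconsf \o consf = id by apply: funext => p; exact: unconsfK.
by [].
Qed.

HB.instance Definition _ := Measure_isSigmaFinite.Build _ _ _
  lebS lebS_sigma_finite.

End lebS.
Arguments consf {R n}.
Arguments unconsf {R n}.
Arguments measurable_unconsf {R n}.
Arguments measurable_consf {R n}.
Arguments consfK {R n}.
Arguments unconsfK {R n}.

Lemma lebN_S (R : realType) n (mu : {sigma_finite_measure set (n.-tuple R) -> \bar R}) :
  @lebN R n = mu -> @lebN R n.+1 = @lebS R n mu.
Proof.
move=> h; apply: funext => A /=; rewrite h /lebS /product_measure1.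
apply: eq_integral => x _ /=; congr (mu _).
by apply/seteqP; split => t /=; rewrite /xsection /= inE.
Qed.

Lemma lebN_measure (R : realType) n :
  exists mu : {sigma_finite_measure set (n.-tuple R) -> \bar R}, @lebN R n = mu.
Proof.
elim: n => [|n [mu IH]].
  exists (@dirac _ _ ([tuple] : 0.-tuple R) R); apply: funext => A /=.
  by [].
by exists (@lebS R n mu); exact: lebN_S.
Qed.
Lemma cube_cons (R : realType) n (r x : R) (t : n.-tuple R) :
  @cube R n.+1 r (cons_tuple x t) <-> (- (r / 2) < x < r / 2) /\ @cube R n r t.
Proof.
split.
  move=> h; split; first by have := h ord0; rewrite (tnth0 x t).
  by move=> j; have := h (lift ord0 j); rewrite (tnthS x t).
move=> [hx ht] i; case: (unliftP ord0 i) => [j ->|->].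
  by rewrite (tnthS x t).
by rewrite (tnth0 x t).
Qed.

Lemma lebN_cube (R : realType) n (r : R) : 0 < r ->
  measurable (@cube R n r) /\ @lebN R n (@cube R n r) = (r ^+ n)%:E.
Proof.
move=> r0; elim: n => [|n [mc IH]].
  have e : @cube R 0 r = setT by apply/seteqP; split => // x _ [].
  rewrite e; split => //.
  by rewrite /= indicE in_setT expr0.
have [mu hmu] := lebN_measure R n.
have e : consf @^-1` (@cube R n.+1 r) = `]- (r/2), r/2[%classic `*` @cube R n r.
  apply/seteqP; split => -[x t] /=; rewrite /preimage /= /consf /=.
    by move/cube_cons => [hx ht]; split => //; rewrite /= in_itv /=.
  by rewrite in_itv /= => -[hx ht]; apply/cube_cons.
have e2 : @cube R n.+1 r = unconsf @^-1` (`]- (r/2), r/2[%classic `*` @cube R n r).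
  rewrite -e; apply/seteqP; split => t /=; rewrite /preimage /= consfK //.
split.
  rewrite e2 -[X in measurable X]setTI; apply: (measurable_unconsf measurableT).
  by apply: measurableX => //; exact: measurable_itv.
rewrite (@lebN_S R n mu hmu) /lebS e product_measure1E //.
rewrite -hmu IH.
have h := @lebesgue_measure_itv R `]- (r/2), r/2[.
rewrite /= ifT in h; last by rewrite lte_fin gtrN // divr_gt0.
rewrite [X in (X * _)%E]h.
rewrite -EFinB -EFinM exprS; congr (_%:E); congr (_ * _).
by rewrite opprK -splitr.
Qed.

Lemma enorm_tsubC (R : realType) n (x y : n.-tuple R) :
  enorm (tsub x y) = enorm (tsub y x).
Proof.
rewrite /enorm; congr Num.sqrt; apply: eq_bigr => j _.
by rewrite !tnth_mktuple -opprB sqrrN.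
Qed.

Lemma tsub_tadd (R : realType) n (x y v : n.-tuple R) :
  tsub (tadd x v) (tadd y v) = tsub x y.
Proof.
apply: eq_from_tnth => j; rewrite !tnth_mktuple.
by rewrite opprD addrACA subrr addr0.
Qed.

Lemma enorm_ge0 (R : realType) n (x : n.-tuple R) : 0 <= enorm x.
Proof. exact: sqrtr_ge0. Qed.

Theorem proposition2p14 (R : realType) (N d M : nat)
    (A : 'I_N -> 'M[R]_(M, d)) (f : N.-tuple R -> d.-tuple R -> R)
    (C1 C2 L : R) :
  measurable_fun setT (fun p : N.-tuple R * d.-tuple R => f p.1 p.2) ->
  (forall x z, 0 <= f x z) ->
  (forall x z (i : 'I_N), f (tshift x i 1) z = f x z) ->
  (forall x z, C1 * enorm z <= f x z /\ f x z <= C2 * (1 + enorm z)) ->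
  0 < L ->
  (forall x z1 z2, `|f x z1 - f x z2| <= L * enorm (tsub z1 z2)) ->
  (forall b, f_A_hom A f b \is a fin_num) /\
  (forall b1 b2, `|fine (f_A_hom A f b1) - fine (f_A_hom A f b2)|
                   <= L * enorm (tsub b1 b2)).
Proof.
move=> mf f0 fper fbnd L0 flip.
have [mu hmu] := lebN_measure R N.
have mg : forall (w : N.-tuple R -> d.-tuple R) b,
    (forall j, measurable_fun setT (fun x => tnth (w x) j)) ->
    measurable_fun setT (fun x => (f x (tadd b (w x)))%:E).
  move=> w b mw; apply/(@measurable_EFinP _ _ R setT (fun x => f x (tadd b (w x)))).
  have mt : measurable_fun setT (fun x => tadd b (w x)).
    apply/measurable_fun_tnthP => j.
    rewrite (_ : _ \o _ = fun x => tnth b j + tnth (w x) j); last first.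
      by apply: funext => x /=; rewrite tnth_mktuple.
    exact: measurable_funD.
  have hh := measurableT_comp mf (measurable_fun_pair (@measurable_id _ _ setT) mt).
  exact: hh.
have key : forall (r : nat) (w : N.-tuple R -> d.-tuple R) (b1 b2 : d.-tuple R), (0 < r)%N -> admissible A r w ->
   (((r%:R ^+ N)^-1)%:E *
      \int[@lebN R N]_(x in @cube R N r%:R) (f x (tadd b1 (w x)))%:E <=
    ((r%:R ^+ N)^-1)%:E *
      \int[@lebN R N]_(x in @cube R N r%:R) (f x (tadd b2 (w x)))%:E
    + (L * enorm (tsub b1 b2))%:E)%E.
  move=> r w b1 b2 r0 [mw _ _ _ _]; rewrite hmu.
  have r0' : (0 < r%:R :> R) by rewrite ltr0n.
  have [mc muc] := @lebN_cube R N _ r0'; rewrite hmu in muc.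
  set c := L * enorm (tsub b1 b2).
  have c0 : 0 <= c by rewrite mulr_ge0 ?enorm_ge0 // ltW.
  have h1 : (\int[mu]_(x in @cube R N r%:R) (f x (tadd b1 (w x)))%:E <=
     \int[mu]_(x in @cube R N r%:R) ((f x (tadd b2 (w x)))%:E + c%:E))%E.
    apply: ge0_le_integral => //.
    - by move=> x _; rewrite lee_fin.
    - exact: measurable_funS (mg w b1 mw).
    - apply: emeasurable_funD; first exact: measurable_funS (mg w b2 mw).
      first [done | apply/measurable_EFinP; exact: measurable_cst | exact: (measurable_cst (c%:E : \bar R))].
    - move=> x _; rewrite -EFinD lee_fin.
      have h := le_trans (ler_norm _) (flip x (tadd b1 (w x)) (tadd b2 (w x))).
      rewrite tsub_tadd -/c in h.
      by rewrite -lerBlDl.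
  rewrite ge0_integralD // in h1; last first; try (by move=> x _; rewrite lee_fin);
    try exact: measurable_funS (mg w b2 mw).
  rewrite (integral_cst mu mc) in h1.
  set m := (X in (c%:E * X)%E) in h1.
  have em : m = (r%:R ^+ N)%:E by exact: muc.
  rewrite em in h1.
  have rinv0 : (0 <= ((r%:R ^+ N)^-1)%:E :> \bar R)%E.
    by rewrite lee_fin invr_ge0 exprn_ge0 // ltW.
  apply: le_trans (lee_wpmul2l rinv0 h1) _.
  rewrite ge0_muleDr //; last by rewrite lee_fin mulr_ge0 // exprn_ge0 // ltW.
  rewrite -EFinM; apply: leeD => //; rewrite lee_fin.
  rewrite mulrCA mulVf ?mulr1 //.
  by rewrite expf_neq0 // gt_eqF.
by apply: integral_ge0 => x _; rewrite lee_fin.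
have lb : forall b, (0 <= f_A_hom A f b)%E.
  move=> b; apply: le_ereal_inf_tmp => v [rr [ww [rr0 adm ->]]].
  apply: mule_ge0; first by rewrite lee_fin invr_ge0 exprn_ge0.
  by rewrite hmu; apply: integral_ge0 => x _; rewrite lee_fin.
pose w0 := fun _ : N.-tuple R => [tuple (0:R) | _ < d].
have adm0 : admissible A 1 w0.
  split.
  - move=> j; rewrite (_ : (fun x => _) = cst 0); first exact: measurable_cst.
    by apply: funext => x; rewrite tnth_mktuple.
  - move=> j; rewrite hmu integral0_eq ?ltry // => x _.
    by rewrite tnth_mktuple normr0.
  - by [].
  - move=> phi _; rewrite hmu integral0_eq // => x _.
    rewrite big1 // => k _; rewrite big1 // => i _; rewrite big1 // => j _.
    by rewrite tnth_mktuple mulr0 mul0r.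
  - by move=> j; rewrite hmu integral0_eq // => x _; rewrite tnth_mktuple.
have mw0 : forall j, measurable_fun setT (fun x => tnth (w0 x) j) by case: adm0.
have ub : forall b, (f_A_hom A f b < +oo)%E.
  move=> b; apply: le_lt_trans; first apply: ereal_inf_lbound.
    exists 1%N, w0; split => //.
  rewrite expr1n invr1 mul1e hmu.
  have r1 : (0 < 1%:R :> R) by rewrite ltr01.
  have [mc muc] := @lebN_cube R N _ r1; rewrite hmu in muc.
  set K := C2 * (1 + enorm (tadd b [tuple (0:R) | _ < d])).
  apply: le_lt_trans.
    apply: (@ge0_le_integral _ _ _ mu _ mc _ (fun=> K%:E)).
    - by move=> x _; rewrite lee_fin.
    - by apply: measurable_funS (mg w0 b mw0).
    - exact: measurable_cst.
    - by move=> x _; rewrite lee_fin; case: (fbnd x (tadd b (w0 x))).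
  rewrite (integral_cst mu mc).
  set m := (X in (K%:E * X)%E).
  have em : m = (1%:R ^+ N)%:E by exact: muc.
  by rewrite em -EFinM ltry.
have fin : forall b, f_A_hom A f b \is a fin_num.
  by move=> b; rewrite ge0_fin_numE ?lb ?ub.
have half : forall b1 b2,
    (f_A_hom A f b1 <= f_A_hom A f b2 + (L * enorm (tsub b1 b2))%:E)%E.
  move=> b1 b2; rewrite -leeBlDr //.
  rewrite [X in (_ <= X)%E]/f_A_hom.
  apply: le_ereal_inf_tmp => v [rr [ww [rr0 adm ->]]].
  rewrite leeBlDr //; apply: le_trans (key rr ww b1 b2 rr0 adm).
  by apply: ereal_inf_lbound; exists rr, ww; split.
split => // b1 b2.
have h1 := half b1 b2; have h2 := half b2 b1.
rewrite -(fineK (fin b1)) -(fineK (fin b2)) -EFinD lee_fin in h1.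
rewrite -(fineK (fin b1)) -(fineK (fin b2)) -EFinD lee_fin enorm_tsubC in h2.
move: h1 h2; set u := fine _; set v := fine _; set c := L * _ => h1 h2.
by rewrite ler_norml; apply/andP; split; lra.
Qed.
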